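(* Let $\mathcal L:\mathbb F^{q\times q}\to\mathbb F^{n\times n}$ be a $*$-linear map with Choi matrix $\mathbb L$ and matricization $L=[L_{ij}]$, and set $m=\operatorname{rank}\mathbb L$. Then: (a) for any matrices $L_1,\ldots,L_m\in\mathbb F^{n\times q}$ with $\operatorname{span}\{L_1,\ldots,L_m\}=\operatorname{span}\{L_{ij}: 1\le i\le n,\ 1\le j\le q\}$, the matrices $A_1,\ldots,A_m$ and $\mathbb H=\mathbb H(\mathcal L;L_1,\ldots,L_m)$ produced by the construction below give a minimal Hill representation $\mathcal L(V)=\sum_{k,l=1}^m \mathbb H_{kl}A_lVA_k^*$ of $\mathcal L$ (for any admissible choice of the scalars $\beta^k_{ij}$); (b) every minimal Hill representation of $\mathcal L$ is obtained in this way from some such $L_1,\ldots,L_m$; (c) the matrices $A_1,\ldots,A_m$ of any minimal Hill representation of $\mathcal L$ satisfy $\operatorname{span}\{A_1,\ldots,A_m\}=\operatorname{span}\{L_{ij}: 1\le i\le n,\ 1\le j\le q\}$; (d) conversely, any $A_1,\ldots,A_m\in\mathbb F^{n\times q}$ satisfying the span identity in (c) appear as the matrices of some minimal Hill representation of $\mathcal L$.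
   Context: $\mathbb F\in\{\mathbb R,\mathbb C\}$. For $T\in\mathbb F^{r\times s}$, $\operatorname{vec}_{r\times s}(T)\in\mathbb F^{rs}$ is the column-stacking vectorization (its $((j-1)r+i)$-th entry is $T_{ij}$). $\mathcal E^{(q)}_{ij}$ denotes the standard basis matrix of $\mathbb F^{q\times q}$ with $1$ in position $(i,j)$. For a linear map $\mathcal L:\mathbb F^{q\times q}\to\mathbb F^{n\times n}$: its matricization is the matrix $L\in\mathbb F^{n^2\times q^2}$ with $L\operatorname{vec}_{q\times q}(V)=\operatorname{vec}_{n\times n}(\mathcal L(V))$ for all $V$, written in block form $L=[L_{ij}]$, $1\le i\le n$, $1\le j\le q$, with blocks $L_{ij}\in\mathbb F^{n\times q}$; its Choi matrix is $\mathbb L=[\mathcal L(\mathcal E^{(q)}_{ij})]_{i,j=1}^q\in\mathbb F^{nq\times nq}$. $\mathcal L$ is $*$-linear if $\mathcal L(V^* )=\mathcal L(V)^*$ for all $V$. A Hill representation of $\mathcal L$ is an identity $\mathcal L(V)=\sum_{k,l=1}^m\mathbb H_{kl}A_lVA_k^*$ for all $V\in\mathbb F^{q\times q}$, with $A_1,\ldots,A_m\in\mathbb F^{n\times q}$ and $\mathbb H=[\mathbb H_{kl}]\in\mathbb F^{m\times m}$ (the Hill matrix); it is minimal if $m$ is the smallest possible among all Hill representations of $\mathcal L$. Construction: given $L_1,\ldots,L_m\in\mathbb F^{n\times q}$ whose span equals $\operatorname{span}\{L_{ij}\}$ (where $m=\operatorname{rank}\mathbb L=\dim\operatorname{span}\{L_{ij}\}$,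 so the $L_k$ are linearly independent), let $\alpha^{ij}_k$ be the unique scalars with $L_{ij}=\sum_{k=1}^m\alpha^{ij}_kL_k$ and let $\beta^k_{ij}$ be any scalars with $L_k=\sum_{i=1}^n\sum_{j=1}^q\beta^k_{ij}L_{ij}$. Set $A_k\in\mathbb F^{n\times q}$ with $(i,j)$ entry $\overline{\alpha^{ij}_k}$, $B_k\in\mathbb F^{n\times q}$ with $(i,j)$ entry $\beta^k_{ij}$, and $\mathbb H(\mathcal L;L_1,\ldots,L_m)=[\vec{\mathbf 1}_n^*(B_k\circ\overline{L_l})\vec{\mathbf 1}_q]_{k,l=1}^m=[\operatorname{trace}(B_kL_l^* )]_{k,l=1}^m$, where $\circ$ is the Hadamard (entrywise) product and $\vec{\mathbf 1}_p$ the all-ones vector in $\mathbb F^p$. *)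

(* Defs.v *)
From HB Require Import structures.
From mathcomp Require Import all_boot all_order all_algebra.
From mathcomp Require Import reals complex.
Set Implicit Arguments. Unset Strict Implicit. Unset Printing Implicit Defensive.
Import Order.TTheory GRing.Theory Num.Theory.
Local Open Scope ring_scope.

(* Everything is stated over a field F equipped with a map [conj] (complex
   conjugation); the theorem instantiates (F, conj) with (R, id) for the reals
   and (R[i], Num.conj) for the complex numbers, R : realType. *)
Section Hill.
Variables (F : fieldType) (conj : F -> F).

Definition adjmx (r s : nat) (A : 'M[F]_(r, s)) : 'M[F]_(s, r) := (map_mx conj A)^T.

(* column-stacking vectorization vec_{r x s}(T): entry number (j-1)r+i is T_ij
   (mxvec is row-major, mxvec_index j i = j*r + i with 0-based indices) *)
Definition vecmx (r s : nat) (T : 'M[F]_(r, s)) : 'cV[F]_(s * r) := (mxvec T^T)^T.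

Definition star_linear (q n : nat) (Lmap : 'M[F]_q -> 'M[F]_n) : Prop :=
  forall V : 'M[F]_q, Lmap (adjmx V) = adjmx (Lmap V).

Definition is_matricization (q n : nat) (Lmap : 'M[F]_q -> 'M[F]_n)
  (Lmat : 'M[F]_(n * n, q * q)) : Prop :=
  forall V : 'M[F]_q, Lmat *m vecmx V = vecmx (Lmap V).

Definition mx_block (q n : nat) (Lmat : 'M[F]_(n * n, q * q)) (i : 'I_n) (j : 'I_q)
  : 'M[F]_(n, q) := \matrix_(r < n, s < q) Lmat (mxvec_index i r) (mxvec_index j s).

Definition choi (q n : nat) (Lmap : 'M[F]_q -> 'M[F]_n) :=
  \mxblock_(i < q, j < q) (Lmap (delta_mx i j) : 'M[F]_(n, n)).

Definition blocks_span (q n : nat) (Lmat : 'M[F]_(n * n, q * q)) : {vspace 'M[F]_(n, q)} :=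
  span [seq mx_block Lmat i j | i <- enum 'I_n, j <- enum 'I_q].

Definition fam_span (q n m : nat) (A : 'I_m -> 'M[F]_(n, q)) : {vspace 'M[F]_(n, q)} :=
  span [seq A k | k <- enum 'I_m].

Definition hill_rep (q n m : nat) (Lmap : 'M[F]_q -> 'M[F]_n)
  (A : 'I_m -> 'M[F]_(n, q)) (H : 'M[F]_m) : Prop :=
  forall V : 'M[F]_q,
    Lmap V = \sum_(k < m) \sum_(l < m) H k l *: (A l *m V *m adjmx (A k)).

Definition min_hill_rep (q n m : nat) (Lmap : 'M[F]_q -> 'M[F]_n)
  (A : 'I_m -> 'M[F]_(n, q)) (H : 'M[F]_m) : Prop :=
  hill_rep Lmap A H /\
  forall (m' : nat) (A' : 'I_m' -> 'M[F]_(n, q)) (H' : 'M[F]_m'),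
    hill_rep Lmap A' H' -> (m <= m')%N.

(* The construction. alpha i j k = alpha^{ij}_k, beta k i j = beta^k_{ij}. *)
Definition alpha_ok (q n m : nat) (Lmat : 'M[F]_(n * n, q * q))
  (Ls : 'I_m -> 'M[F]_(n, q)) (alpha : 'I_n -> 'I_q -> 'I_m -> F) : Prop :=
  forall i j, mx_block Lmat i j = \sum_(k < m) alpha i j k *: Ls k.

Definition beta_ok (q n m : nat) (Lmat : 'M[F]_(n * n, q * q))
  (Ls : 'I_m -> 'M[F]_(n, q)) (beta : 'I_m -> 'I_n -> 'I_q -> F) : Prop :=
  forall k, Ls k = \sum_(i < n) \sum_(j < q) beta k i j *: mx_block Lmat i j.

Definition hill_A (q n m : nat) (alpha : 'I_n -> 'I_q -> 'I_m -> F) (k : 'I_m)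
  : 'M[F]_(n, q) := \matrix_(i < n, j < q) conj (alpha i j k).

Definition hill_B (q n m : nat) (beta : 'I_m -> 'I_n -> 'I_q -> F) (k : 'I_m)
  : 'M[F]_(n, q) := \matrix_(i < n, j < q) beta k i j.

Definition hill_H (q n m : nat) (Ls : 'I_m -> 'M[F]_(n, q))
  (beta : 'I_m -> 'I_n -> 'I_q -> F) : 'M[F]_m :=
  \matrix_(k < m, l < m) \tr (hill_B beta k *m adjmx (Ls l)).

Definition theorem1p1_stmt : Prop :=
  forall (q n : nat) (Lmap : 'M[F]_q -> 'M[F]_n) (Lmat : 'M[F]_(n * n, q * q)) (m : nat),
    linear Lmap -> star_linear Lmap -> is_matricization Lmap Lmat ->
    m = \rank (choi Lmap) ->
    [/\
        forall (Ls : 'I_m -> 'M[F]_(n, q)), fam_span Ls = blocks_span Lmat ->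
        forall alpha beta, alpha_ok Lmat Ls alpha -> beta_ok Lmat Ls beta ->
          min_hill_rep Lmap (hill_A alpha) (hill_H Ls beta),
        forall (m' : nat) (A : 'I_m' -> 'M[F]_(n, q)) (H : 'M[F]_m'),
          min_hill_rep Lmap A H ->
          exists Ls : 'I_m' -> 'M[F]_(n, q), fam_span Ls = blocks_span Lmat /\
          exists alpha beta, [/\ alpha_ok Lmat Ls alpha, beta_ok Lmat Ls beta,
                                 A = hill_A alpha & H = hill_H Ls beta],
        forall (m' : nat) (A : 'I_m' -> 'M[F]_(n, q)) (H : 'M[F]_m'),
          min_hill_rep Lmap A H -> fam_span A = blocks_span Lmat
      &
        forall (A : 'I_m -> 'M[F]_(n, q)), fam_span A = blocks_span Lmat ->
          exists H : 'M[F]_m, min_hill_rep Lmap A H].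

End Hill.

(* Main.v *)
Require Import Defs.
From HB Require Import structures.
From mathcomp Require Import all_boot all_order all_algebra.
From mathcomp Require Import reals complex.
From Stdlib Require Import FunctionalExtensionality.
Import Order.TTheory GRing.Theory Num.Theory.
Set Implicit Arguments. Unset Strict Implicit. Unset Printing Implicit Defensive.
Local Open Scope ring_scope.

Section G.
Variables (K : fieldType) (vT : vectType K).

Lemma dim_span_rank (X : seq vT) d (f : vT -> 'rV[K]_d) :
  linear f -> injective f ->
  \dim <<X>>%VS = \rank (\matrix_(k < size X) f X`_k).
Proof.
move=> lf fi.
pose fL : {linear vT -> 'rV[K]_d} := HB.pack f (GRing.isLinear.Build _ _ _ _ f lf).
have -> : \dim <<X>>%VS = \rank (VectorInternalTheory.b2mx (in_tuple X)).
  by rewrite /dimv [@span _ _]unlock VectorInternalTheory.mx2vsK.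
pose g := fun u : 'rV_(dim vT) => fL (VectorInternalTheory.r2v u).
have hr : forall a (u v : 'rV_(dim vT)), VectorInternalTheory.r2v (a *: u + v) = a *: VectorInternalTheory.r2v u + VectorInternalTheory.r2v v.
  move=> a u v; apply: (@VectorInternalTheory.v2r_inj _ vT).
  have [hZ hD] := v2r_semilinear (VectorInternalTheory.v2r_subproof vT).
  by rewrite VectorInternalTheory.r2vK /VectorInternalTheory.v2r hD hZ -!/(VectorInternalTheory.v2r _) !VectorInternalTheory.r2vK.
have lg : linear g by move=> a u v; rewrite /g /= hr lf.
pose gL : {linear 'rV_(dim vT) -> 'rV[K]_d} := HB.pack g (GRing.isLinear.Build _ _ _ _ g lg).
have -> : \matrix_(k < size X) f X`_k = VectorInternalTheory.b2mx (in_tuple X) *m lin1_mx gL.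
  apply/row_matrixP => k; rewrite row_mul rowK mul_rV_lin1 /= /g.
  by rewrite rowK VectorInternalTheory.v2rK (tnth_nth 0).
have r0 : VectorInternalTheory.r2v (0 : 'rV_(dim vT)) = 0.
  have := hr 1 0 0; rewrite !scale1r addr0.
  by move/(congr1 (fun y => y - VectorInternalTheory.r2v (0 : 'rV_(dim vT)))); rewrite subrr addrK => <-.
have f0 : f 0 = 0.
  have := lf 1 0 0; rewrite !scale1r addr0.
  by move/(congr1 (fun y => y - f 0)); rewrite subrr addrK => <-.
rewrite mxrankMfree //; apply: inj_row_free => v; rewrite mul_rV_lin1 /= /g => /eqP.
rewrite -f0 => /eqP /fi; rewrite -r0 => /VectorInternalTheory.r2v_inj.
by [].
Qed.
End G.

Section Spans.
Variables (K : fieldType) (vT : vectType K).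

Lemma span_mapP (I : finType) (g : I -> vT) v :
  reflect (exists c : I -> K, v = \sum_i c i *: g i)
          (v \in <<[seq g i | i <- enum I]>>%VS).
Proof.
apply: (iffP idP) => [|[c ->]].
  rewrite span_def big_map big_enum /= => /memv_sumP [vs Hvs ->].
  have /fin_all_exists [c Hc] : forall i, exists k : K, vs i = k *: g i.
    by move=> i; apply/vlineP/Hvs.
  by exists c; apply: eq_bigr => i _; rewrite Hc.
apply: memv_suml => i _; apply: memvZ; apply: memv_span.
by apply: map_f; rewrite mem_enum.
Qed.

Lemma span_pairP a b (g : 'I_a -> 'I_b -> vT) v :
  reflect (exists c : 'I_a -> 'I_b -> K, v = \sum_i \sum_j c i j *: g i j)
          (v \in <<[seq g i j | i <- enum 'I_a, j <- enum 'I_b]>>%VS).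
Proof.
rewrite (@eq_span _ _ _ [seq g p.1 p.2 | p : 'I_a * 'I_b <- enum [the finType of ('I_a * 'I_b)%type]]); last first.
  move=> x; apply/allpairsP/mapP => [[[i j] [_ _ ->]] | [[i j] _ ->]].
    by exists (i, j); rewrite ?mem_enum.
  by exists (i, j); rewrite ?mem_enum.
apply: (iffP (span_mapP _ _)) => [[c ->] | [c ->]].
  by exists (fun i j => c (i, j)); rewrite pair_big; apply: eq_bigr => -[].
by exists (fun p => c p.1 p.2); rewrite pair_big.
Qed.

End Spans.

Section Main.
Variables (F : fieldType) (conj : F -> F).
Hypotheses (conjD : forall x y, conj (x + y) = conj x + conj y)
  (conjM : forall x y, conj (x * y) = conj x * conj y)
  (conj1 : conj 1 = 1) (conjK : forall x, conj (conj x) = x).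

Lemma conj0 : conj 0 = 0.
Proof. by have := conjD 0 0; rewrite addr0 => /(congr1 (fun y => y - conj 0)); rewrite subrr addrK => <-. Qed.

Lemma conj_sum (I : Type) (r : seq I) (P : pred I) (f : I -> F) :
  conj (\sum_(i <- r | P i) f i) = \sum_(i <- r | P i) conj (f i).
Proof. exact: (big_morph conj conjD conj0). Qed.

Lemma conj_inj : injective conj.
Proof. exact: can_inj conjK. Qed.

Local Notation adj := (adjmx conj).

Lemma adj_entry r s (A : 'M[F]_(r, s)) i j : adj A i j = conj (A j i).
Proof. by rewrite /adjmx !mxE. Qed.

Lemma vec_entry r s (T : 'M[F]_(r, s)) (i : 'I_s) (a : 'I_r) :
  vecmx T (mxvec_index i a) 0 = T a i.
Proof. by rewrite /vecmx mxE mxvecE mxE. Qed.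

Variables (q n : nat) (Lmap : 'M[F]_q -> 'M[F]_n) (Lmat : 'M[F]_(n * n, q * q)).
Hypotheses (Llin : linear Lmap) (Lstar : star_linear conj Lmap)
  (Lmt : is_matricization Lmap Lmat).

Lemma block_entry i j r s : mx_block Lmat i j r s = Lmap (delta_mx s j) r i.
Proof.
rewrite mxE -(vec_entry (Lmap _)) -Lmt /vecmx trmx_delta mxvec_delta trmx_delta -colE.
by rewrite mxE.
Qed.

Lemma Lmat_entry i j r s :
  Lmat (mxvec_index i r) (mxvec_index j s) = Lmap (delta_mx s j) r i.
Proof. by rewrite -block_entry mxE. Qed.

Lemma Lmap_exp V : Lmap V = \sum_s \sum_j V s j *: Lmap (delta_mx s j).
Proof.
pose LL : {linear 'M[F]_q -> 'M[F]_n} := HB.pack Lmap (GRing.isLinear.Build _ _ _ _ Lmap Llin).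
have -> : Lmap = LL by [].
rewrite {1}(matrix_sum_delta V) linear_sum; apply: eq_bigr => s _.
by rewrite linear_sum; apply: eq_bigr => j _; rewrite linearZ.
Qed.

Lemma Lmap_entry V r i : Lmap V r i = \sum_s \sum_j V s j * mx_block Lmat i j r s.
Proof.
rewrite Lmap_exp summxE; apply: eq_bigr => s _; rewrite summxE; apply: eq_bigr => j _.
by rewrite mxE block_entry.
Qed.

Lemma adj_delta (s j : 'I_q) : adj (delta_mx s j) = delta_mx j s.
Proof.
apply/matrixP => a b; rewrite adj_entry !mxE.
by rewrite andbC; case: (_ && _); rewrite ?conj1 ?conj0.
Qed.

Lemma block_sym i j r s : mx_block Lmat i j r s = conj (mx_block Lmat r s i j).
Proof.
by rewrite !block_entry -[delta_mx j s]adj_delta Lstar adj_entry conjK.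
Qed.


Lemma mul_delta_entry (a b c d : nat) (B : 'M[F]_(a, b)) (s : 'I_b) (j : 'I_c)
  (C : 'M[F]_(c, d)) r i : (B *m delta_mx s j *m C) r i = B r s * C j i.
Proof.
rewrite -(mul_delta_mx (0 : 'I_1)) mulmxA -colE -mulmxA -rowE mxE big_ord1.
by rewrite !mxE.
Qed.

Definition rep m (A : 'I_m -> 'M[F]_(n, q)) (H : 'M[F]_m) (V : 'M[F]_q) : 'M[F]_n :=
  \sum_(k < m) \sum_(l < m) H k l *: (A l *m V *m adj (A k)).

Lemma hill_repE m A H : hill_rep conj Lmap A H <-> forall V, Lmap V = @rep m A H V.
Proof. by []. Qed.

Lemma rep_delta_entry m A H s j r i :
  @rep m A H (delta_mx s j) r i = \sum_k \sum_l H k l * (A l r s * conj (A k i j)).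
Proof.
rewrite summxE; apply: eq_bigr => k _; rewrite summxE; apply: eq_bigr => l _.
by rewrite mxE mul_delta_entry adj_entry.
Qed.

Lemma blocks_of_rep m A H : hill_rep conj Lmap A H ->
  forall i j, mx_block Lmat i j = \sum_(l < m) (\sum_(k < m) H k l * conj (A k i j)) *: A l.
Proof.
move=> hr i j; apply/matrixP => r s.
rewrite block_entry hr rep_delta_entry summxE exchange_big /=.
apply: eq_bigr => l _; rewrite mxE mulr_suml; apply: eq_bigr => k _.
by rewrite mulrA mulrAC.
Qed.


Notation S1 := (@tagnat.sig1 q (fun=> n)).
Notation S2 := (@tagnat.sig2 q (fun=> n)).
Notation RK := (@tagnat.Rank q (fun=> n)).
Lemma choi_entry s t : choi Lmap s t = Lmap (delta_mx (S1 s) (S1 t)) (S2 s) (S2 t).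
Proof. by rewrite mxE. Qed.
Lemma RK1 (i : 'I_q) (a : 'I_n) : S1 (RK i a) = i.
Proof. exact: tagnat.Rank1K. Qed.
Lemma RK2 (i : 'I_q) (a : 'I_n) : S2 (RK i a) = a.
Proof. by apply: val_inj; rewrite tagnat.Rank2K. Qed.

Definition fvec (Y : 'M[F]_(n, q)) : 'rV[F]_(\sum_(i < q) n) := \row_t Y (S2 t) (S1 t).

Lemma fvec_lin : linear fvec.
Proof. by move=> a Y Z; apply/rowP => t; rewrite !mxE. Qed.

Lemma fvec_inj : injective fvec.
Proof.
move=> Y Z e; apply/matrixP => a i.
by move/rowP: e => /(_ (RK i a)); rewrite !mxE RK1 RK2.
Qed.

Lemma fvec_block b j : fvec (mx_block Lmat b j) = row (RK j b) (choi Lmap)^T.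
Proof.
apply/rowP => s; rewrite !mxE Lmat_entry.
by rewrite RK1 RK2.
Qed.

Lemma dim_blocks : \dim (blocks_span Lmat) = \rank (choi Lmap).
Proof.
rewrite /blocks_span (dim_span_rank _ fvec_lin fvec_inj) -(mxrank_tr (choi Lmap)).
apply: eqmx_rank; apply/andP; split; apply/row_subP => k.
  rewrite rowK.
  have /allpairsP [[b j] [_ _ ->]] := mem_nth 0 (ltn_ord k).
  by rewrite /= fvec_block row_sub.
set x := mx_block Lmat (S2 k) (S1 k).
have xX : x \in [seq mx_block Lmat i j | i <- enum 'I_n, j <- enum 'I_q].
  by apply/allpairsP; exists (S2 k, S1 k); rewrite !mem_enum.
have -> : row k (choi Lmap)^T = fvec x.
  by apply/rowP => s; rewrite !mxE Lmat_entry.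
have ix : (index x [seq mx_block Lmat i j | i <- enum 'I_n, j <- enum 'I_q] < size [seq mx_block Lmat i j | i <- enum 'I_n, j <- enum 'I_q])%N by rewrite index_mem.
rewrite -(nth_index 0 xX).
rewrite -[fvec _](rowK (fun k0 : 'I_(size [seq mx_block Lmat i j | i <- enum 'I_n, j <- enum 'I_q]) => fvec [seq mx_block Lmat i j | i <- enum 'I_n, j <- enum 'I_q]`_k0) (Ordinal ix)).
by rewrite row_sub.
Qed.


Lemma rep_lin m A H : linear (@rep m A H).
Proof.
move=> a V W; rewrite /rep scaler_sumr -big_split; apply: eq_bigr => k _.
rewrite scaler_sumr -big_split; apply: eq_bigr => l _.
by rewrite mulmxDr mulmxDl -scalemxAr -scalemxAl scalerDr !scalerA mulrC.
Qed.

Lemma rep_exp m A H V :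
  @rep m A H V = \sum_s \sum_j V s j *: rep A H (delta_mx s j).
Proof.
pose LL : {linear 'M[F]_q -> 'M[F]_n} := HB.pack (@rep m A H) (GRing.isLinear.Build _ _ _ _ _ (@rep_lin m A H)).
have -> : @rep m A H = LL by [].
rewrite {1}(matrix_sum_delta V) linear_sum; apply: eq_bigr => s _.
by rewrite linear_sum; apply: eq_bigr => j _; rewrite linearZ.
Qed.

Lemma fam_memP m (A : 'I_m -> 'M[F]_(n, q)) v :
  reflect (exists c : 'I_m -> F, v = \sum_k c k *: A k) (v \in fam_span A).
Proof. exact: span_mapP. Qed.

Lemma blocks_memP v :
  reflect (exists c : 'I_n -> 'I_q -> F, v = \sum_i \sum_j c i j *: mx_block Lmat i j)
          (v \in blocks_span Lmat).
Proof. exact: span_pairP. Qed.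

Lemma dim_fam m (A : 'I_m -> 'M[F]_(n, q)) : (\dim (fam_span A) <= m)%N.
Proof. by rewrite (leq_trans (dim_span _)) // size_map size_enum_ord. Qed.



Lemma blocks_sub_rep m (A : 'I_m -> 'M[F]_(n, q)) H : hill_rep conj Lmap A H -> (blocks_span Lmat <= @fam_span _ _ _ m A)%VS.
Proof.
move=> hr; apply/span_subvP => x /allpairsP [[a b] [_ _ ->]] /=.
by apply/fam_memP; eexists; apply: (blocks_of_rep hr).
Qed.

Lemma rank_le_rep m (A : 'I_m -> 'M[F]_(n, q)) H : hill_rep conj Lmap A H -> (\rank (choi Lmap) <= m)%N.
Proof.
move=> hr; rewrite -dim_blocks (leq_trans (dimvS (blocks_sub_rep hr))) //.
exact: dim_fam.
Qed.

Section Construction.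
Variables (m : nat) (Ls : 'I_m -> 'M[F]_(n, q)) (alpha : 'I_n -> 'I_q -> 'I_m -> F)
  (beta : 'I_m -> 'I_n -> 'I_q -> F).
Hypotheses (aok : alpha_ok Lmat Ls alpha) (bok : beta_ok Lmat Ls beta).

Lemma Ls_entry k r s : Ls k r s = \sum_l hill_H conj Ls beta k l * conj (alpha r s l).
Proof.
rewrite (bok k) summxE.
under eq_bigr => a _ do rewrite summxE.
under eq_bigr => a _ do under eq_bigr => b _ do rewrite mxE block_sym (aok r s) summxE conj_sum mulr_sumr.
under [RHS]eq_bigr => l _ do rewrite mxE /mxtrace mulr_suml.
under [RHS]eq_bigr => l _ do under eq_bigr => a _ do rewrite mxE mulr_suml.
rewrite [RHS]exchange_big /=; apply: eq_bigr => a _.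
rewrite [RHS]exchange_big /=; apply: eq_bigr => b _.
apply: eq_bigr => l _.
by rewrite !mxE conjM -mulrA; congr (_ * _); exact: mulrC.
Qed.

Lemma construction_rep : hill_rep conj Lmap (hill_A conj alpha) (hill_H conj Ls beta).
Proof.
move=> V; rewrite Lmap_exp -/(rep _ _ V) rep_exp; apply: eq_bigr => s _.
apply: eq_bigr => j _; congr (_ *: _); apply/matrixP => r i.
rewrite -block_entry rep_delta_entry (aok i j) summxE.
apply: eq_bigr => k _; rewrite mxE Ls_entry mulr_sumr; apply: eq_bigr => l _.
by rewrite !mxE conjK mulrCA; congr (_ * _); exact: mulrC.
Qed.

End Construction.

Lemma rep_sub m (A : 'I_m -> 'M[F]_(n, q)) H1 H2 V :
  rep A (H1 - H2) V = rep A H1 V - rep A H2 V.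
Proof.
rewrite /rep -sumrB; apply: eq_bigr => k _; rewrite -sumrB; apply: eq_bigr => l _.
by rewrite !mxE scalerBl.
Qed.

Lemma fam_free m (A : 'I_m -> 'M[F]_(n, q)) : \dim (fam_span A) = m ->
  forall c : 'I_m -> F, \sum_k c k *: A k = 0 -> forall k, c k = 0.
Proof.
move=> hd c hc k.
have fT : free [tuple A k | k < m].
  have -> : tval [tuple A k | k < m] = [seq A k | k <- enum 'I_m].
    by [].
  by rewrite /free size_map size_enum_ord hd.
move/freeP: fT => /(_ c) h; apply: h; rewrite -[RHS]hc; apply: eq_bigr => i _.
by rewrite -tnth_nth tnth_mktuple.
Qed.

Lemma rep_inj m (A : 'I_m -> 'M[F]_(n, q)) H1 H2 :
  (forall c : 'I_m -> F, \sum_k c k *: A k = 0 -> forall k, c k = 0) ->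
  (forall V, rep A H1 V = rep A H2 V) -> H1 = H2.
Proof.
move=> fr e; apply/eqP; rewrite -subr_eq0; apply/eqP; set D := H1 - H2.
have hD : forall s j, rep A D (delta_mx s j) = 0 by move=> s j; rewrite rep_sub e subrr.
apply/matrixP => k l; rewrite [RHS]mxE.
have h1 : forall i j l, \sum_k D k l * conj (A k i j) = 0.
  move=> i j; apply: fr; apply/matrixP => r s; rewrite [RHS]mxE.
  have := congr1 (fun M : 'M[F]_n => M r i) (hD s j); rewrite rep_delta_entry mxE => h0.
  rewrite -[RHS]h0 exchange_big summxE /=.
  apply: eq_big => // l0 _; rewrite mxE mulr_suml; apply: eq_big => // k0 _.
  by rewrite -mulrA [conj _ * _]mulrC.
have h2 : \sum_k0 conj (D k0 l) *: A k0 = 0.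
  apply/matrixP => i j; rewrite summxE [RHS]mxE.
  have := congr1 conj (h1 i j l); rewrite conj0 conj_sum => h; rewrite -[RHS]h.
  by apply: eq_big => // k0 _; rewrite mxE conjM conjK.
by apply: conj_inj; rewrite conj0; exact: (fr _ h2 k).
Qed.

Lemma adj_comb m (c : 'I_m -> F) (A : 'I_m -> 'M[F]_(n, q)) :
  adj (\sum_r c r *: A r) = \sum_r conj (c r) *: adj (A r).
Proof.
apply/matrixP => x y; rewrite adj_entry !summxE conj_sum.
by apply: eq_bigr => r _; rewrite !mxE conjM.
Qed.

Lemma tri_mul m (a b : 'I_m -> F) (X Y : 'I_m -> 'M[F]_(n, q)) (V : 'M[F]_q) :
  (\sum_p a p *: X p) *m V *m (\sum_r b r *: adj (Y r)) =
  \sum_p \sum_r (a p * b r) *: (X p *m V *m adj (Y r)).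
Proof.
rewrite !mulmx_suml; apply: eq_big => // p _.
rewrite -!scalemxAl mulmx_sumr scaler_sumr; apply: eq_big => // r _.
by rewrite -scalemxAr scalerA.
Qed.

Lemma rep_change m (A A0 : 'I_m -> 'M[F]_(n, q)) (H0 S : 'M[F]_m) :
  (forall l, A0 l = \sum_p S p l *: A p) ->
  forall V, rep A0 H0 V =
    rep A (\matrix_(r, p) \sum_k \sum_l conj (S r k) * H0 k l * S p l) V.
Proof.
move=> hA V; rewrite /rep.
have e : forall k l, H0 k l *: (A0 l *m V *m adj (A0 k)) = \sum_p \sum_r
    (H0 k l * (S p l * conj (S r k))) *: (A p *m V *m adj (A r)).
  move=> k l; rewrite !hA adj_comb tri_mul scaler_sumr; apply: eq_big => // p _.
  by rewrite scaler_sumr; apply: eq_big => // r _; rewrite scalerA.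
under eq_bigr => k _ do under eq_bigr => l _ do rewrite e pair_big.
under eq_bigr => k _ do rewrite exchange_big /=.
rewrite exchange_big /= [RHS]exchange_big /= [RHS]pair_big /=.
apply: eq_big => // -[p r] _ /=.
rewrite mxE scaler_suml; apply: eq_big => // k _.
rewrite scaler_suml; apply: eq_big => // l _.
by congr (_ *: _); rewrite [S p l * _]mulrC mulrA [H0 k l * _]mulrC.
Qed.

Lemma min_span m (A : 'I_m -> 'M[F]_(n, q)) H : hill_rep conj Lmap A H ->
  (m <= \rank (choi Lmap))%N -> fam_span A = blocks_span Lmat.
Proof.
move=> hr hm; apply/eqP; rewrite eq_sym eqEdim (blocks_sub_rep hr) /=.
by rewrite dim_blocks (leq_trans (dim_fam A)).
Qed.

Lemma block_in i j : mx_block Lmat i j \in blocks_span Lmat.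
Proof. by apply: memv_span; apply/allpairsP; exists (i, j); rewrite !mem_enum. Qed.

Lemma fam_in m (A : 'I_m -> 'M[F]_(n, q)) k : A k \in fam_span A.
Proof. by apply: memv_span; apply: map_f; rewrite mem_enum. Qed.

Lemma ab_exist m (Ls : 'I_m -> 'M[F]_(n, q)) : fam_span Ls = blocks_span Lmat ->
  exists alpha beta, alpha_ok Lmat Ls alpha /\ beta_ok Lmat Ls beta.
Proof.
move=> hs.
have ha : forall i, exists f : 'I_q -> 'I_m -> F, forall j,
    mx_block Lmat i j = \sum_k f j k *: Ls k.
  move=> i.
  have /fin_all_exists [f Hf] : forall j, exists c : 'I_m -> F,
      mx_block Lmat i j = \sum_k c k *: Ls k.
    by move=> j; apply/fam_memP; rewrite hs block_in.
  by exists f.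
have /fin_all_exists [alpha Ha] := ha.
have hb : forall k, exists c : 'I_n -> 'I_q -> F,
    Ls k = \sum_i \sum_j c i j *: mx_block Lmat i j.
  by move=> k; apply/blocks_memP; rewrite -hs fam_in.
have /fin_all_exists [beta Hb] := hb.
by exists alpha, beta; split.
Qed.

Lemma exists_Ls : exists Ls : 'I_(\rank (choi Lmap)) -> 'M[F]_(n, q),
  fam_span Ls = blocks_span Lmat.
Proof.
set U := blocks_span Lmat.
exists (fun k => (vbasis U)`_k); rewrite /fam_span.
have -> : [seq (vbasis U)`_k | k : 'I_(\rank (choi Lmap)) <- enum 'I_(\rank (choi Lmap))] = vbasis U.
  have -> : [seq (vbasis U)`_k | k : 'I_(\rank (choi Lmap)) <- enum 'I_(\rank (choi Lmap))] =
      [seq (vbasis U)`_i | i <- [seq nat_of_ord k | k : 'I_(\rank (choi Lmap)) <- enum 'I_(\rank (choi Lmap))]].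
    by rewrite -map_comp.
  rewrite val_enum_ord.
  rewrite (_ : \rank (choi Lmap) = size (vbasis U)); last by rewrite size_tuple dim_blocks.
  exact: mkseq_nth.
exact: span_basis (vbasisP U).
Qed.

Lemma exists_rep : exists (A0 : 'I_(\rank (choi Lmap)) -> 'M[F]_(n, q)) H0,
  hill_rep conj Lmap A0 H0.
Proof.
have [Ls hs] := exists_Ls.
have [alpha [beta [ha hb]]] := ab_exist hs.
by exists (hill_A conj alpha), (hill_H conj Ls beta); apply: construction_rep.
Qed.

Lemma main_parts :
    [/\
        forall (Ls : 'I_(\rank (choi Lmap)) -> 'M[F]_(n, q)), fam_span Ls = blocks_span Lmat ->
        forall alpha beta, alpha_ok Lmat Ls alpha -> beta_ok Lmat Ls beta ->
          min_hill_rep conj Lmap (hill_A conj alpha) (hill_H conj Ls beta),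
        forall (m' : nat) (A : 'I_m' -> 'M[F]_(n, q)) (H : 'M[F]_m'),
          min_hill_rep conj Lmap A H ->
          exists Ls : 'I_m' -> 'M[F]_(n, q), fam_span Ls = blocks_span Lmat /\
          exists alpha beta, [/\ alpha_ok Lmat Ls alpha, beta_ok Lmat Ls beta,
                                 A = hill_A conj alpha & H = hill_H conj Ls beta],
        forall (m' : nat) (A : 'I_m' -> 'M[F]_(n, q)) (H : 'M[F]_m'),
          min_hill_rep conj Lmap A H -> fam_span A = blocks_span Lmat
      &
        forall (A : 'I_(\rank (choi Lmap)) -> 'M[F]_(n, q)), fam_span A = blocks_span Lmat ->
          exists H : 'M[F]_(\rank (choi Lmap)), min_hill_rep conj Lmap A H].
Proof.
split.
- move=> Ls hs alpha beta ha hb; split; first exact: construction_rep.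
  by move=> m' A' H' /rank_le_rep.
- move=> m' A H [hr hmin].
  have hm' : (m' <= \rank (choi Lmap))%N.
    by have [A0 [H0 h0]] := exists_rep; exact: hmin _ _ _ h0.
  have hs := min_span hr hm'.
  have hle := rank_le_rep hr.
  have hdim : \dim (fam_span A) = m'.
    by rewrite hs dim_blocks; apply/eqP; rewrite eqn_leq hle hm'.
  have fr := fam_free hdim.
  pose Ls k := \sum_l H k l *: A l.
  pose alpha i j k := conj (A k i j).
  have ha : alpha_ok Lmat Ls alpha.
    move=> i j; rewrite (blocks_of_rep hr).
    under [RHS]eq_bigr => k _ do rewrite scaler_sumr.
    rewrite [RHS]exchange_big /=; apply: eq_big => // l _.
    rewrite scaler_suml; apply: eq_big => // k _.
    by rewrite scalerA mulrC.
  have hsL : fam_span Ls = blocks_span Lmat.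
    apply/eqP; rewrite eqEsubv; apply/andP; split.
      rewrite -hs; apply/span_subvP => x /mapP [k _ ->].
      by apply/fam_memP; exists (H k).
    apply/span_subvP => x /allpairsP [[i j] [_ _ ->]].
    by apply/fam_memP; exists (alpha i j); exact: ha.
  have hb0 : forall k, exists c : 'I_n -> 'I_q -> F,
      Ls k = \sum_i \sum_j c i j *: mx_block Lmat i j.
    by move=> k; apply/blocks_memP; rewrite -hsL fam_in.
  have /fin_all_exists [beta hb] := hb0.
  have hA : hill_A conj alpha = A.
    by apply: functional_extensionality => k; apply/matrixP => i j; rewrite mxE conjK.
  exists Ls; split => //; exists alpha, beta; split => //.
  apply: (rep_inj fr) => V.
  have := construction_rep ha hb V; rewrite hA => e.
  by rewrite /rep -e; exact: (esym (hr V)).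
- move=> m' A H [hr hmin]; apply: (min_span hr).
  by have [A0 [H0 h0]] := exists_rep; exact: hmin _ _ _ h0.
- move=> A hs.
  have [A0 [H0 h0]] := exists_rep.
  have hs0 := min_span h0 (leqnn _).
  have hS : forall l, exists c : 'I_(\rank (choi Lmap)) -> F, A0 l = \sum_p c p *: A p.
    by move=> l; apply/fam_memP; rewrite hs -hs0 fam_in.
  have /fin_all_exists [S' HS'] := hS.
  pose S := \matrix_(p, l) S' l p.
  exists (\matrix_(r, p) \sum_k \sum_l conj (S r k) * H0 k l * S p l).
  split; last by move=> m' A' H' /rank_le_rep.
  move=> V; rewrite h0; apply: rep_change => l.
  rewrite HS'; apply: eq_big => // p _; by rewrite mxE.
Qed.

End Main.

Theorem generic_thm (F : fieldType) (conj : F -> F)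
  (conjD : forall x y, conj (x + y) = conj x + conj y)
  (conjM : forall x y, conj (x * y) = conj x * conj y)
  (conj1 : conj 1 = 1) (conjK : forall x, conj (conj x) = x) :
  theorem1p1_stmt conj.
Proof.
move=> q n Lmap Lmat m Llin Lstar Lmt ->.
exact: (main_parts conjD conjM conj1 conjK Llin Lstar Lmt).
Qed.


Theorem theorem1p1 (R : realType) :
  theorem1p1_stmt (fun x : R => x) /\ theorem1p1_stmt (fun x : R[i] => Num.conj x).
Proof.
split; apply: generic_thm => //.
- by move=> x y; rewrite rmorphD.
- by move=> x y; rewrite rmorphM.
- by rewrite rmorph1.
- by move=> x; rewrite conjCK.
Qed.
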